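(* Let $A$ be a transferable wqo and $B$ any wqo. Then $\mathbf{w}(A\times B)\ge \mathbf{w}(A)\cdot \mathbf{o}(B)$.
   Context: A wqo is a quasi-order with no infinite bad sequence (a sequence $x_0,x_1,\dots$ is bad if there are no $i<j$ with $x_i\le x_j$). For a wqo, $\mathbf{w}(A)$ (width) is the rank of the forest of nonempty finite sequences of pairwise incomparable elements ordered by initial segment, and $\mathbf{o}(A)$ (maximal order type) is the rank of the forest of nonempty finite bad sequences ordered by initial segment (rank: $r(s)=\sup\{r(t)+1:t$ child of $s\}$, invariant $=\sup_s(r(s)+1)$); equivalently $\mathbf{o}(A)$ is the largest order type of a linear extension of $A$. $A_{\not\le Y}=\{y\in A: y\not\le x \text{ for all } x\in Y\}$. $A$ is transferable if $\mathbf{w}(A_{\not\le Y})=\mathbf{w}(A)$ for every finite $Y\subseteq A$. $A\times B$ has the componentwise order; $\cdot$ is ordinary ordinal multiplication. *)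

(* Defs.v *)
From Stdlib Require Import List Arith.
Import ListNotations.

(* OLim I f denotes sup_{i:I} f i (for arbitrary, possibly empty, index I). *)
Inductive Ord : Type :=
| OZ : Ord
| OS : Ord -> Ord
| OLim : forall (I : Type), (I -> Ord) -> Ord.

(* ole x y  <->  |x| <= |y| ; the inner fix computes |x'| < |y|. *)
Fixpoint ole (x y : Ord) {struct x} : Prop :=
  match x with
  | OZ => True
  | OS x' =>
      (fix olt_x (y : Ord) : Prop :=
         match y with
         | OZ => False
         | OS y' => ole x' y'
         | OLim _ g => exists j, olt_x (g j)
         end) y
  | OLim _ f => forall i, ole (f i) y
  end.

Definition olt (x y : Ord) : Prop := ole (OS x) y.
Definition oeq (x y : Ord) : Prop := ole x y /\ ole y x.

(* Ordinal addition, by recursion on the right argument.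
   a + sup_i b_i = sup ({a} U {a + b_i}) (correct also for empty sups). *)
Fixpoint oadd (a b : Ord) : Ord :=
  match b with
  | OZ => a
  | OS b' => OS (oadd a b')
  | OLim J f => OLim (option J)
                  (fun o => match o with
                            | None => a
                            | Some i => oadd a (f i)
                            end)
  end.

Fixpoint omul (a b : Ord) : Ord :=
  match b with
  | OZ => OZ
  | OS b' => oadd (omul a b') a
  | OLim J f => OLim J (fun i => omul a (f i))
  end.

(* R y x : y is a child of x.  has_rank R x a : node x has rank
   a = sup { rank y + 1 : y child of x }. *)
Inductive has_rank {T : Type} (R : T -> T -> Prop) : T -> Ord -> Prop :=
| has_rank_intro (x : T) (f : {y : T | R y x} -> Ord) :
    (forall y, has_rank R (proj1_sig y) (f y)) ->
    has_rank R x (OLim {y : T | R y x} (fun y => OS (f y))).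

(* Forest of nodes (finite sequences satisfying P) ordered by initial segment:
   children of s are the one-element extensions of s that are nodes. *)
Definition seq_child {T : Type} (P : list T -> Prop) (t s : list T) : Prop :=
  P t /\ exists x, t = s ++ [x].

Definition forest_inv {T : Type} (P : list T -> Prop) (a : Ord) : Prop :=
  exists f : {s : list T | P s} -> Ord,
    (forall s, has_rank (seq_child P) (proj1_sig s) (f s)) /\
    a = OLim {s : list T | P s} (fun s => OS (f s)).

Definition is_qo {T : Type} (le : T -> T -> Prop) : Prop :=
  (forall x, le x x) /\ (forall x y z, le x y -> le y z -> le x z).

Definition is_wqo {T : Type} (le : T -> T -> Prop) : Prop :=
  is_qo le /\
  forall f : nat -> T, exists i j, i < j /\ le (f i) (f j).

Definition antichain_seq {T : Type} (le : T -> T -> Prop) (s : list T) : Prop :=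
  s <> [] /\ ForallOrdPairs (fun x y => ~ le x y /\ ~ le y x) s.

Definition bad_seq {T : Type} (le : T -> T -> Prop) (s : list T) : Prop :=
  s <> [] /\ ForallOrdPairs (fun x y => ~ le x y) s.

Definition is_width {T : Type} (le : T -> T -> Prop) (a : Ord) : Prop :=
  forest_inv (antichain_seq le) a.

Definition is_mot {T : Type} (le : T -> T -> Prop) (a : Ord) : Prop :=
  forest_inv (bad_seq le) a.

Definition not_below {T : Type} (le : T -> T -> Prop) (Y : list T) : Type :=
  {y : T | forall x, In x Y -> ~ le y x}.

Definition not_below_le {T : Type} (le : T -> T -> Prop) (Y : list T)
  (u v : not_below le Y) : Prop := le (proj1_sig u) (proj1_sig v).

Definition transferable {T : Type} (le : T -> T -> Prop) : Prop :=
  forall (Y : list T) (a b : Ord),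
    is_width le a -> is_width (not_below_le le Y) b -> oeq b a.

Definition prod_le {T U : Type} (leT : T -> T -> Prop) (leU : U -> U -> Prop)
  (p q : T * U) : Prop := leT (fst p) (fst q) /\ leU (snd p) (snd q).

(* Main.v *)
Require Import Defs.
From Stdlib Require Import List Arith Lia Classical ClassicalEpsilon.
Import ListNotations.

Lemma le_lim : forall a (II : Type) (g : II -> Ord) j, ole a (g j) -> ole a (OLim II g).
Proof.
  induction a as [|a' IH|J f IH]; intros II g j H; simpl in *.
  - exact Logic.I.
  - exists j. exact H.
  - intro i. apply (IH i II g j). apply H.
Qed.

Lemma le_S_lt : forall a, (forall b, ole a b -> ole a (OS b)) /\ (forall b, ole (OS a) b -> ole a b).
Proof.
  induction a as [|a' IH|J f IH].
  - split; intros; exact Logic.I.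
  - destruct IH as [IH1 IH2]. split.
    + intros b H. exact (IH2 b H).
    + induction b as [|b' IHb|K g IHb]; intro H.
      * destruct H.
      * exact (IH2 b' H).
      * destruct H as [j Hj]. apply le_lim with j. apply IHb. exact Hj.
  - split.
    + intros b H i. apply (proj1 (IH i)). apply H.
    + induction b as [|b' IHb|K g IHb]; intro H.
      * destruct H.
      * intro i. apply (proj1 (IH i)). apply H.
      * destruct H as [j Hj]. intro i. apply le_lim with j. apply (IHb j Hj).
Qed.

Lemma le_S : forall a b, ole a b -> ole a (OS b).
Proof. intro a. exact (proj1 (le_S_lt a)). Qed.
Lemma lt_le : forall a b, ole (OS a) b -> ole a b.
Proof. intro a. exact (proj2 (le_S_lt a)). Qed.

Lemma le_refl : forall a, ole a a.
Proof.
  induction a as [|a' IH|J f IH]; simpl.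
  - exact Logic.I.
  - exact IH.
  - intro i. apply le_lim with i. apply IH.
Qed.

Lemma le_trans : forall x y z, ole x y -> ole y z -> ole x z.
Proof.
  induction x as [|x' IHx|J f IHx]; intros y z H1 H2.
  - exact Logic.I.
  - revert z H1 H2. induction y as [|y' IHy|K g IHy]; intros z H1 H2.
    + destruct H1.
    + induction z as [|z' IHz|L h IHz].
      * destruct H2.
      * exact (IHx y' z' H1 H2).
      * destruct H2 as [j Hj]. exists j. apply IHz. exact Hj.
    + destruct H1 as [j Hj]. apply (IHy j z Hj). apply H2.
  - intro i. apply (IHx i y z). apply H1. exact H2.
Qed.

Lemma OS_mono : forall a b, ole a b -> ole (OS a) (OS b).
Proof. intros a b H. exact H. Qed.

Lemma le_S_lim : forall a (II : Type) (g : II -> Ord) j, ole (OS a) (g j) -> ole (OS a) (OLim II g).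
Proof. intros. apply le_lim with j. exact H. Qed.

Lemma add_ge_left : forall x y, ole x (oadd x y).
Proof.
  intros x y; induction y as [|y' IH|J f IH]; simpl.
  - apply le_refl.
  - apply le_S. exact IH.
  - apply le_lim with None. apply le_refl.
Qed.

Lemma add_mono : forall x b c, ole b c -> ole (oadd x b) (oadd x c).
Proof.
  intro x. induction b as [|b' IHb|J f IHb]; intros c H.
  - apply add_ge_left.
  - induction c as [|c' IHc|K g IHc].
    + destruct H.
    + exact (IHb c' H).
    + destruct H as [j Hj]. simpl. exists (Some j). apply (IHc j Hj).
  - simpl. intros [i|].
    + apply IHb. apply H.
    + apply add_ge_left.
Qed.

Lemma add_zero : forall x y, ole x OZ -> ole y OZ -> ole (oadd x y) OZ.
Proof.
  intros x y Hx. induction y as [|y' IH|J f IH]; intro Hy; simpl.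
  - exact Hx.
  - destruct Hy.
  - intros [i|]. apply IH. apply Hy. exact Hx.
Qed.

Lemma mul_zero : forall w r, ole w OZ -> ole (omul w r) OZ.
Proof.
  intros w r Hw. induction r as [|r' IH|J f IH]; simpl.
  - exact Logic.I.
  - apply add_zero; assumption.
  - intro i. apply IH.
Qed.

Lemma FOP_app {X} (R : X -> X -> Prop) : forall l1 l2,
  ForallOrdPairs R (l1 ++ l2) <->
  ForallOrdPairs R l1 /\ ForallOrdPairs R l2 /\ (forall x y, In x l1 -> In y l2 -> R x y).
Proof.
  induction l1 as [|a l1 IH]; intro l2; simpl.
  - split. intro H; repeat split; auto. constructor. intros x y []. tauto.
  - split.
    + intro H. inversion H; subst. apply IH in H3. destruct H3 as [H3 [H4 H5]].
      rewrite Forall_app in H2. destruct H2 as [H2 H2'].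
      repeat split; auto. constructor; auto.
      intros x y [<-|Hx] Hy. rewrite Forall_forall in H2'; auto. auto.
    + intros [H1 [H2 H3]]. inversion H1; subst. constructor.
      * rewrite Forall_app. split; auto. rewrite Forall_forall. intros; auto.
      * apply IH. repeat split; auto.
Qed.

Lemma has_rank_inv {X} (R : X -> X -> Prop) x a : has_rank R x a ->
  exists f : {y : X | R y x} -> Ord, (forall y, has_rank R (proj1_sig y) (f y)) /\
    a = OLim {y : X | R y x} (fun y => OS (f y)).
Proof. intro H. destruct H. eauto. Qed.

Lemma rank_ex {X} (R : X -> X -> Prop) x : Acc R x -> exists a, has_rank R x a.
Proof.
  induction 1 as [x _ IH].
  set (f := fun y : {y : X | R y x} =>
              proj1_sig (constructive_indefinite_description _ (IH (proj1_sig y) (proj2_sig y)))).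
  exists (OLim {y : X | R y x} (fun y => OS (f y))). constructor.
  intro y. unfold f. exact (proj2_sig (constructive_indefinite_description _ _)).
Qed.

Lemma acc_antichain {X} (le : X -> X -> Prop)
  (Hw : forall f : nat -> X, exists i j, i < j /\ le (f i) (f j)) :
  forall s, Acc (seq_child (antichain_seq le)) s.
Proof.
  set (R := seq_child (antichain_seq le)).
  intro s0. apply NNPP; intro Hn.
  assert (step : forall s, ~ Acc R s -> exists z, ~ Acc R (s ++ [z]) /\ antichain_seq le (s ++ [z])).
  { intros s Hs. apply NNPP; intro H. apply Hs. constructor. intros y [Py [z ->]].
    apply NNPP; intro H'. apply H. eauto. }
  destruct (step s0 Hn) as [z0 _].
  set (zf := fun s => epsilon (inhabits z0)
                         (fun z => ~ Acc R (s ++ [z]) /\ antichain_seq le (s ++ [z]))).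
  set (h := fun n => nat_rect (fun _ => list X) s0 (fun _ s => s ++ [zf s]) n).
  assert (HS : forall n, h (S n) = h n ++ [zf (h n)]) by reflexivity.
  assert (Hh1 : forall n, ~ Acc R (h n)).
  { induction n as [|n IH]. exact Hn.
    rewrite HS. exact (proj1 (epsilon_spec (inhabits z0) _ (step _ IH))). }
  assert (Hh : forall n, ~ Acc R (h n) /\ antichain_seq le (h (S n))).
  { intro n. split. apply Hh1. rewrite HS.
    exact (proj2 (epsilon_spec (inhabits z0) _ (step _ (Hh1 n)))). }
  assert (Hpre : forall i j, i < j -> exists m, h j = h (S i) ++ m).
  { intros i j. induction j as [|j IH]; intro Hij. lia.
    destruct (Nat.eq_dec i j) as [->|Hne]. exists []. rewrite app_nil_r. reflexivity.
    destruct IH as [m Hm]. lia. exists (m ++ [zf (h j)]). rewrite HS, Hm, app_assoc. reflexivity. }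
  destruct (Hw (fun n => zf (h n))) as [i [j [Hij Hle]]].
  destruct (Hpre i j Hij) as [m Hm].
  destruct (Hh j) as [_ [_ Ha]]. rewrite HS in Ha. remember (zf (h j)) as zj. rewrite Hm, HS in Ha.
  rewrite <- !app_assoc in Ha. rewrite app_assoc in Ha.
  apply FOP_app in Ha. destruct Ha as [_ [_ Ha]].
  refine (proj1 (Ha (zf (h i)) zj _ _) Hle).
  - apply in_or_app. right. left. reflexivity.
  - apply in_or_app. right. left. reflexivity.
Qed.

Lemma width_exists {X} (le : X -> X -> Prop)
  (Hw : forall f : nat -> X, exists i j, i < j /\ le (f i) (f j)) :
  exists w, is_width le w.
Proof.
  set (P := antichain_seq le).
  assert (H : forall s : {s : list X | P s}, exists a, has_rank (seq_child P) (proj1_sig s) a).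
  { intro s. apply rank_ex. apply acc_antichain. exact Hw. }
  set (f := fun s => proj1_sig (constructive_indefinite_description _ (H s))).
  exists (OLim {s : list X | P s} (fun s => OS (f s))). exists f. split; [|reflexivity].
  intro s. unfold f. exact (proj2_sig (constructive_indefinite_description _ _)).
Qed.

Lemma desc_rank {X} (P : list X -> Prop)
  (Hcl : forall l1 l2, P (l1 ++ l2) -> l1 <> [] -> P l1) :
  forall l x a, has_rank (seq_child P) x a -> P (x ++ l) ->
  exists b, has_rank (seq_child P) (x ++ l) b /\ ole b a.
Proof.
  induction l as [|z l IH]; intros x a H HP.
  - exists a. rewrite app_nil_r. split; [exact H | apply le_refl].
  - replace (x ++ z :: l) with ((x ++ [z]) ++ l) in * by (rewrite <- app_assoc; reflexivity).
    assert (Pc : P (x ++ [z])).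
    { apply Hcl with l. exact HP. destruct x; discriminate. }
    destruct (has_rank_inv _ _ _ H) as [g [Hg ->]].
    set (c := exist (fun y => seq_child P y x) (x ++ [z]) (conj Pc (ex_intro _ z eq_refl))).
    destruct (IH (x ++ [z]) (g c) (Hg c) HP) as [b [Hb Hle]].
    exists b. split. exact Hb. apply le_trans with (g c). exact Hle.
    apply le_lim with c. apply le_S. apply le_refl.
Qed.

Lemma antichain_prefix {X} (le : X -> X -> Prop) :
  forall l1 l2, antichain_seq le (l1 ++ l2) -> l1 <> [] -> antichain_seq le l1.
Proof.
  intros l1 l2 [_ H] Hne. split. exact Hne. apply FOP_app in H. tauto.
Qed.

Section Main.
Context {T U : Type} (leT : T -> T -> Prop) (leU : U -> U -> Prop).

Definition PA := antichain_seq (prod_le leT leU).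
Definition INC (p q : T * U) := ~ prod_le leT leU p q /\ ~ prod_le leT leU q p.
Definition phi {Y} (b : U) (u : not_below leT Y) : T * U := (proj1_sig u, b).
Definition BQ (t : list U) (y : U) := forall c, In c t -> ~ leU c y.
Definition good (S : list (T * U)) (Y : list T) (t : list U) :=
  forall x y, (forall z, In z Y -> ~ leT x z) -> BQ t y ->
  forall p, In p S -> INC p (x, y).

Lemma P_ext Y t b S (s : list (not_below leT Y)) :
  good S Y t -> ForallOrdPairs INC S -> BQ t b ->
  ForallOrdPairs (fun x y => ~ not_below_le leT Y x y /\ ~ not_below_le leT Y y x) s ->
  ForallOrdPairs INC (S ++ map (phi b) s).
Proof.
  intros Hg HS Hb Hs. apply FOP_app. split; [exact HS|split].
  - clear Hg HS. induction Hs as [|u s Hu Hs IH]; simpl; constructor; [|exact IH].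
    rewrite Forall_map. eapply Forall_impl; [|exact Hu].
    intros v [H1 H2]. unfold INC, prod_le, phi; simpl. split; intros [H _]; auto.
  - intros p q Hp Hq. apply in_map_iff in Hq. destruct Hq as [u [<- _]].
    apply Hg; auto. exact (proj2_sig u).
Qed.

Lemma good_ext Y t b S (s : list (not_below leT Y)) :
  good S Y t -> good (S ++ map (phi b) s) (Y ++ map (@proj1_sig _ _) s) (t ++ [b]).
Proof.
  intros Hg x y Hx Hy p Hp. apply in_app_or in Hp. destruct Hp as [Hp|Hp].
  - apply Hg; auto. intros z Hz; apply Hx; apply in_or_app; auto.
    intros c Hc; apply Hy; apply in_or_app; auto.
  - apply in_map_iff in Hp. destruct Hp as [u [<- Hu]]. unfold INC, prod_le, phi; simpl.
    split; intros [H1 H2].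
    + apply (Hy b). apply in_or_app; right; left; reflexivity. exact H2.
    + apply (Hx (proj1_sig u)). apply in_or_app; right. apply in_map; exact Hu. exact H1.
Qed.

Lemma L (t : list U) (b : U) (X : Ord) Y
  (HM : forall Y' S d, good S Y' (t ++ [b]) -> PA S -> has_rank (seq_child PA) S d -> ole X d)
  (Hb : BQ t b) :
  forall s sg, has_rank (seq_child (antichain_seq (not_below_le leT Y))) s sg ->
  antichain_seq (not_below_le leT Y) s ->
  forall S, good S Y t -> ForallOrdPairs INC S ->
  forall d, has_rank (seq_child PA) (S ++ map (phi b) s) d -> ole (oadd X sg) d.
Proof.
  intros s sg H. induction H as [s f Hf IH].
  intros Has S Hg HS d Hd. simpl. intros [c|].
  - pose proof (IH c) as IHc. destruct c as [y [Py [u ->]]]. simpl in *.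
    destruct (has_rank_inv _ _ _ Hd) as [g [Hgr ->]].
    assert (PA' : PA ((S ++ map (phi b) s) ++ [phi b u])).
    { split. destruct S; destruct s; discriminate.
      rewrite <- app_assoc. change ([phi b u]) with (map (phi b) [u]). rewrite <- map_app.
      apply P_ext with t; auto. exact (proj2 Py). }
    set (c := exist (fun y => seq_child PA y (S ++ map (phi b) s)) _
                 (conj PA' (ex_intro (fun z => _ = _ ++ [z]) (phi b u) eq_refl))).
    exists c.
    apply IHc with S; auto.
    pose proof (Hgr c) as Hr.
    simpl in Hr. rewrite map_app, app_assoc. exact Hr.
  - apply HM with (Y ++ map (@proj1_sig _ _) s) (S ++ map (phi b) s).
    + apply good_ext. exact Hg.
    + split. destruct Has as [Hne _]. destruct S; destruct s; try discriminate; congruence.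
      apply P_ext with t; auto. exact (proj2 Has).
    + exact Hd.
Qed.


Lemma Step (t : list U) (b : U) (X wA : Ord)
  (Hw : forall f : nat -> T, exists i j, i < j /\ leT (f i) (f j))
  (Htr : transferable leT) (HwA : is_width leT wA)
  (HXz : ole wA OZ -> ole X OZ)
  (HM : forall Y' S d, good S Y' (t ++ [b]) -> PA S -> has_rank (seq_child PA) S d -> ole X d)
  (Hb : BQ t b) :
  forall Y S d, good S Y t -> ForallOrdPairs INC S ->
  (forall u : not_below leT Y, exists d', has_rank (seq_child PA) (S ++ [phi b u]) d' /\ ole (OS d') d) ->
  ole (oadd X wA) d.
Proof.
  intros Y S d Hg HS HSu.
  assert (HwV : forall f : nat -> not_below leT Y, exists i j, i < j /\ not_below_le leT Y (f i) (f j)).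
  { intro f. destruct (Hw (fun n => proj1_sig (f n))) as [i [j H]]. exists i, j. exact H. }
  destruct (width_exists _ HwV) as [ws Hws].
  assert (Hle : ole wA ws) by exact (proj2 (Htr Y wA ws HwA Hws)).
  destruct Hws as [sg [Hsg ->]].
  destruct (classic (exists u : not_below leT Y, True)) as [[u0 _]|Hno].
  - apply le_trans with (oadd X (OLim _ (fun s => OS (sg s)))).
    + apply add_mono. exact Hle.
    + simpl. intros [c|].
      * destruct c as [s Hs]. simpl. destruct s as [|u s'].
        { exfalso. apply (proj1 Hs). reflexivity. }
        destruct (HSu u) as [d' [Hd' Hled']].
        assert (PD : PA ((S ++ [phi b u]) ++ map (phi b) s')).
        { split. destruct S; discriminate.
          rewrite <- app_assoc. change ([phi b u] ++ map (phi b) s') with (map (phi b) (u :: s')).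
          apply P_ext with t; auto. exact (proj2 Hs). }
        destruct (desc_rank PA (antichain_prefix _) _ _ _ Hd' PD) as [e [He Hlee]].
        change (ole (OS (oadd X (sg (exist _ (u :: s') Hs)))) d).
        apply le_trans with (OS d'); [|exact Hled'].
        apply OS_mono. apply le_trans with e; [|exact Hlee].
        apply (L t b X Y HM Hb (u :: s') _ (Hsg (exist _ (u :: s') Hs)) Hs S Hg HS).
        rewrite <- app_assoc in He. exact He.
      * destruct (HSu u0) as [d' [Hd' Hled']].
        assert (Has : antichain_seq (not_below_le leT Y) [u0]).
        { split. discriminate. constructor. constructor. constructor. }
        pose proof (L t b X Y HM Hb [u0] _ (Hsg (exist _ [u0] Has)) Has S Hg HS d' Hd') as HL.
        apply le_trans with (oadd X (sg (exist _ [u0] Has))). apply add_ge_left.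
        apply le_trans with d'. exact HL.
        apply le_trans with (OS d'). apply le_S, le_refl. exact Hled'.
  - assert (Hz : ole wA OZ).
    { apply le_trans with (OLim _ (fun s => OS (sg s))). exact Hle.
      simpl. intros [s Hs]. exfalso. destruct s as [|u s]. destruct Hs; congruence.
      apply Hno. exists u. exact Logic.I. }
    apply le_trans with OZ. apply add_zero. apply HXz, Hz. exact Hz. exact Logic.I.
Qed.

Lemma M (wA : Ord)
  (Hw : forall f : nat -> T, exists i j, i < j /\ leT (f i) (f j))
  (Htr : transferable leT) (HwA : is_width leT wA) :
  forall t r, has_rank (seq_child (bad_seq leU)) t r ->
  forall Y S d, good S Y t -> PA S -> has_rank (seq_child PA) S d -> ole (omul wA r) d.
Proof.
  intros t r H. induction H as [t f Hf IH]. intros Y S d Hg HPS Hd. simpl. intro c.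
  pose proof (IH c) as IHc. destruct c as [t' [Bt' [b ->]]]. simpl in *.
  assert (Hb : BQ t b).
  { intros c Hc. pose proof (proj2 Bt') as B. apply FOP_app in B. destruct B as [_ [_ B]].
    apply B. exact Hc. left. reflexivity. }
  apply Step with t b Y S; auto.
  - intro Hz. apply mul_zero. exact Hz.
  - exact (proj2 HPS).
  - intro u. destruct (has_rank_inv _ _ _ Hd) as [g [Hgr ->]].
    assert (PA' : PA (S ++ [phi b u])).
    { split. destruct S; discriminate. change [phi b u] with (map (phi b) [u]).
      apply P_ext with t; auto. exact (proj2 HPS).
      constructor. constructor. constructor. }
    set (c := exist (fun y => seq_child PA y S) _
                 (conj PA' (ex_intro (fun z => _ = _ ++ [z]) (phi b u) eq_refl))).
    exists (g c). split. exact (Hgr c). apply le_lim with c. apply le_refl.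
Qed.

End Main.


Theorem mainTheorem5 (T U : Type) (leT : T -> T -> Prop) (leU : U -> U -> Prop) :
  is_wqo leT -> is_wqo leU -> transferable leT ->
  forall (wA oB wAB : Ord),
    is_width leT wA -> is_mot leU oB -> is_width (prod_le leT leU) wAB ->
    ole (omul wA oB) wAB.
Proof.
  intros [_ Hw] _ Htr wA oB wAB HwA [r [Hr ->]] [f [Hf ->]].
  simpl. intros [t Ht]. simpl.
  destruct (exists_last (proj1 Ht)) as [t0 [b Eb]].
  pose proof (Hr (exist _ t Ht)) as Hrt. simpl in Hrt.
  assert (Hb : BQ leU t0 b).
  { intros c Hc. pose proof (proj2 Ht) as B. rewrite Eb in B. apply FOP_app in B.
    destruct B as [_ [_ B]]. apply B. exact Hc. left. reflexivity. }
  apply (Step leT leU t0 b _ wA Hw Htr HwA (mul_zero _ _)) with (Y := []) (S := []); auto.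
  - intros Y' S d Hg HPS Hd. rewrite <- Eb in Hg.
    exact (M leT leU wA Hw Htr HwA t _ Hrt Y' S d Hg HPS Hd).
  - intros x y _ _ p [].
  - constructor.
  - intro u. assert (PA' : PA leT leU ([] ++ [phi leT b u])).
    { split. discriminate. constructor. constructor. constructor. }
    exists (f (exist _ _ PA')). split. exact (Hf (exist _ _ PA')).
    apply le_lim with (exist _ _ PA'). apply le_refl.
Qed.
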